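(* Consider a 3-S 3-D MUN-D (as in the context) in which the min-cut between $S_i$ and $T_j$ is at least $1$ for all $i,j\in\{1,2,3\}$. Let $n=2n'+1$, let $\alpha\in\mathbb{F}_{p^m}$ have multiplicative order $n$, regard the LECs $\underline{\varepsilon}$ as indeterminates, and for $i,j\in\{1,2,3\}$ let $\hat M_{ij}=\mathrm{diag}\big(M_{ij}(\alpha^0),M_{ij}(\alpha^1),\dots,M_{ij}(\alpha^{n-1})\big)$. Then $\det \hat M_{ij}$ is a nonzero polynomial in $\underline{\varepsilon}$ for all $i,j\in\{1,2,3\}$.
   Context: A three-source three-destination multiple unicast network with delays (3-S 3-D MUN-D) is a finite directed acyclic graph whose links each carry one symbol of $\mathbb{F}_{p^m}$ per time unit with unit delay, with sources $S_1,S_2,S_3$ each generating one process and destinations $T_1,T_2,T_3$ each with one output, $T_i$ demanding the process of $S_i$; the min-cut between $S_i$ and $T_i$ is $1$. Linear network coding with time-invariant local encoding coefficients (LECs) $\underline{\varepsilon}$ is used: a link's symbol at time $t+1$ is an LEC-weighted sum of the source symbol (if its tail is a source) and of the symbols on incoming links of its tail at time $t$, and $T_j$'s output at time $t+1$ is an LEC-weighted sum of its incoming link symbols at time $t$. The resulting transfer function from $S_i$ to $T_j$ is $D^{d'_{min}}M_{ij}(D)$ with $M_{ij}(D)=\sum_{d=0}^{d_{max}}M_{ij}^{(d)}D^d$, where $d'_{min}$ is the minimum path delay over all source-destination pairs and the coefficients $M_{ij}^{(d)}$ are polynomials in $\underline{\varepsilon}$. *)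

(* Defs.v *)
From HB Require Import structures.
From mathcomp Require Import all_boot all_order all_algebra all_field.
From mathcomp Require Import mpoly.
Set Implicit Arguments. Unset Strict Implicit. Unset Printing Implicit Defensive.
Import GRing.Theory.
Local Open Scope ring_scope.

Section Network.
Variables (V E : finType) (tl hd : E -> V).

Definition is_path (u v : V) (s : seq E) : bool :=
  if s is e :: s' then
    [&& tl e == u, path (fun a b => hd a == tl b) e s' & hd (last e s') == v]
  else false.

Definition acyclic : Prop := forall (u : V) (s : seq E), ~~ is_path u u s.

Definition cuts (C : {set E}) (u v : V) : Prop :=
  forall s : seq E, is_path u v s -> has (fun e => e \in C) s.

(* "the min-cut between u and v (unit link capacities) equals k":
   k is the least size of a link set cutting u from v *)
Definition is_mincut (u v : V) (k : nat) : Prop :=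
  (exists C : {set E}, cuts C u v /\ #|C| = k) /\
  (forall C : {set E}, cuts C u v -> (k <= #|C|)%N).

(* Local encoding coefficients:
   inl (inl (i,e))  : source S_i -> link e   (meaningful when tl e = S_i)
   inl (inr (e,f))  : link e -> link f       (meaningful when hd e = tl f)
   inr (e,j)        : link e -> output of T_j (meaningful when hd e = T_j) *)
Definition LEC : finType := (('I_3 * E) + (E * E) + (E * 'I_3))%type.

Variable F : fieldType.
Notation R := {mpoly F[#|{: LEC}|]}.

Definition eps (l : LEC) : R := 'X_(enum_rank l).

Variables (S T : 'I_3 -> V).

Definition path_gain (i j : 'I_3) (s : seq E) : R :=
  if s is e :: s' then
    eps (inl (inl (i, e)))
    * \prod_(p <- zip s (behead s)) eps (inl (inr p))
    * eps (inr (last e s', j))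
  else 0.

(* A path with k.+1 links has delay k.+2 (one unit per link, one at T_j).
   In a DAG every path has at most #|E| links. *)
Definition transfer (i j : 'I_3) : {poly R} :=
  \sum_(k < #|E|) \sum_(t : k.+1.-tuple E | is_path (S i) (T j) t)
     (path_gain i j t)%:P * 'X^(k.+2).

Definition dmin : nat :=
  \big[minn/#|E|.+2]_(i : 'I_3) \big[minn/#|E|.+2]_(j : 'I_3)
   \big[minn/#|E|.+2]_(k < #|E|)
    \big[minn/#|E|.+2]_(t : k.+1.-tuple E | is_path (S i) (T j) t) k.+2.

(* transfer i j = D^dmin * M i j *)
Definition Mtf (i j : 'I_3) : {poly R} := drop_poly dmin (transfer i j).

Definition Mhat (n : nat) (alpha : F) (i j : 'I_3) : 'M[R]_n :=
  diag_mx (\row_(a < n) (Mtf i j).[(alpha ^+ a)%:MP]).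

End Network.

(* Main.v *)
Require Import Defs.
From HB Require Import structures.
From mathcomp Require Import all_boot all_order all_algebra all_field.
From mathcomp Require Import mpoly.
From Stdlib Require Import Classical.
Set Implicit Arguments. Unset Strict Implicit. Unset Printing Implicit Defensive.
Import GRing.Theory.
Local Open Scope ring_scope.

Lemma bigminn_le (I : finType) x (P : pred I) (F : I -> nat) j :
  P j -> (\big[minn/x]_(i | P i) F i <= F j)%N.
Proof.
move=> Pj; have := mem_index_enum j.
elim: (index_enum I) => // a r IH; rewrite inE big_cons.
case/orP => [/eqP<-|jr]; first by rewrite Pj geq_minl.
by case: (P a); rewrite ?geq_min IH ?orbT.
Qed.

Lemma bigminn_leT (I : finType) x (P : pred I) (F : I -> nat) j y :
  P j -> (F j <= y)%N -> (\big[minn/x]_(i | P i) F i <= y)%N.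
Proof. by move=> Pj h; apply: leq_trans h; apply: bigminn_le. Qed.

Lemma mem_zip1 (X Y : eqType) (s : seq X) (t : seq Y) x y :
  (x, y) \in zip s t -> x \in s.
Proof.
elim: s t => [|a s IH] [|b t] //=.
case/predU1P => [[-> _]|/IH].
  by rewrite mem_head.
by move=> h; rewrite in_cons h orbT.
Qed.

Lemma path_uniq (V E : finType) (tl hd : E -> V) :
  acyclic tl hd -> forall s u v, is_path tl hd u v s -> uniq s.
Proof.
move=> ac; elim=> [//|e s IH] u v /=.
case/and3P=> _ pth hl; apply/andP; split.
  apply/negP => es; move: pth hl; case/splitPr: es => s1 s2.
  rewrite cat_path /= => /andP[p1 /andP[h _]] _.
  by have := ac (tl e) (e :: s1); rewrite /= eqxx p1 h.
case: s IH pth hl => [//|f s] IH /= /andP[/eqP hf pth] hl.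
by apply: (IH (tl f) v); rewrite /= eqxx pth.
Qed.

Lemma chain_eq (E : eqType) (t : seq E) : forall e s,
  uniq (e :: t) -> uniq (e :: s) ->
  {subset zip (e :: t) t <= zip (e :: s) s} -> last e t = last e s -> t = s.
Proof.
elim: t => [|f t IH] e s ut us sub hl.
  case: s us sub hl => [//|x s] /= /andP[ne _] _ hl.
  by move: ne; rewrite hl mem_last.
have hin : (e, f) \in zip (e :: s) s by apply: sub; exact: mem_head.
case: s us sub hl hin => [//|x s] us sub hl /=.
case/predU1P => [[fx]|/mem_zip1 ex]; last first.
  by move: us; rewrite /= ex.
subst x; congr (_ :: _); apply: (IH f).
- by case/andP: ut.
- by case/andP: us.
- move=> q qin; have : q \in zip (e :: f :: t) (f :: t) by rewrite /= in_cons qin orbT.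
  move/sub; case/predU1P => [qe|//].
  by move: ut qin; rewrite qe /= => /andP[ne _] /mem_zip1; rewrite (negbTE ne).
- by [].
Qed.

Definition inL (E : finType) (i j : 'I_3) (e : E) (s' : seq E) (l : LEC E) : bool :=
 match l with
 | inl (inl (i', e')) => (i' == i) && (e' == e)
 | inl (inr p) => p \in zip (e :: s') s'
 | inr (e', j') => (e' == last e s') && (j' == j)
 end.

Lemma prod_bool (F : fieldType) (X : Type) (r : seq X) (b : X -> bool) :
  \prod_(x <- r) ((b x)%:R : F) = (all b r)%:R.
Proof.
elim: r => [|x r IH]; first by rewrite big_nil.
by rewrite big_cons IH /=; case: (b x); rewrite ?mul1r ?mul0r.
Qed.

Theorem lemma3 (p m : nat) (F : finFieldType) (V E : finType)
  (tl hd : E -> V) (S T : 'I_3 -> V) (n' : nat) (alpha : F) :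
  prime p -> (0 < m)%N -> p \in [pchar F] -> #|{: F}| = (p ^ m)%N ->
  acyclic tl hd -> injective S -> injective T ->
  (forall i : 'I_3, is_mincut tl hd (S i) (T i) 1) ->
  (forall i j : 'I_3, exists k, is_mincut tl hd (S i) (T j) k /\ (1 <= k)%N) ->
  (n'.*2.+1).-primitive_root alpha ->
  forall i j : 'I_3, \det (Mhat tl hd S T (n'.*2.+1) alpha i j) != 0.
Proof.
move=> _ _ _ _ ac _ _ _ Hc prim i j.
rewrite det_diag; apply/prodf_neq0 => a _; rewrite mxE.
have a0 : alpha != 0.
  apply/eqP => h; move: (prim_expr_order prim); rewrite h expr0n /=.
  by move/eqP; rewrite eq_sym oner_eq0.
have c0 : alpha ^+ a != 0 by rewrite expf_neq0.
have [s ps] : exists s, is_path tl hd (S i) (T j) s.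
  case: (Hc i j) => k [[_ min] k1]; apply: NNPP => np.
  have : cuts tl hd set0 (S i) (T j).
    by move=> s ps; exfalso; apply: np; exists s.
  by move/min; rewrite cards0 leqn0 => /eqP k0; rewrite k0 in k1.
case: s ps => [//|e s'] ps.
have us := path_uniq ac ps.
have szE : (size s' < #|E|)%N.
  by rewrite -[(size s').+1]/(size (e :: s')) -(card_uniqP us) max_card.
pose k0 : 'I_#|E| := Ordinal szE.
pose s0 : k0.+1.-tuple E := in_tuple (e :: s').
pose v (x : 'I_#|{: LEC E}|) : F := (inL i j e s' (enum_val x))%:R.
have hX : forall l, meval v (eps F l) = (inL i j e s' l)%:R.
  by move=> l; rewrite /eps mevalXU /v enum_rankK.
have hev : forall t, is_path tl hd (S i) (T j) t ->
    meval v (path_gain F i j t) = (t == e :: s')%:R.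
  case=> [//|f t'] pt; have ut := path_uniq ac pt.
  rewrite /path_gain /= !rmorphM /= rmorph_prod /= !hX.
  under eq_bigr do rewrite hX.
  rewrite prod_bool -!natrM !mulnb; congr (_%:R); congr (nat_of_bool _); apply/idP/idP.
    case/andP => [/andP[/andP[_ /eqP fe] /allP al] /andP[/eqP le _]]; subst f.
    apply/eqP; congr (_ :: _); apply: (chain_eq ut us); first by move=> q /al.
    by [].
  move/eqP => [-> ->]; rewrite /= !eqxx /= andbT; by apply/allP => q /=.
have hT : map_poly (meval v) (transfer tl hd F S T i j) = 'X^(k0.+2).
  rewrite /transfer rmorph_sum (bigD1 k0) //=.
  rewrite [X in _ + X = _]big1 ?addr0; last first.
    move=> k nk; rewrite rmorph_sum; apply: big1 => t pt.
    rewrite rmorphM /= map_polyC map_polyXn /= hev //.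
    case: eqP => [ht|_]; last by rewrite polyC0 mul0r.
    exfalso; move: nk (size_tuple t); rewrite ht /= => /negP nk [hk].
    by apply: nk; apply/eqP/val_inj => /=; rewrite -hk.
  rewrite rmorph_sum (bigD1 s0 ps) [X in _ + X = _]big1 ?addr0; last first.
    move=> t /andP[pt nt]; rewrite rmorphM /= map_polyC map_polyXn /= hev //.
    have -> : (tval t == e :: s') = false.
      by apply/negbTE; apply: contra nt => /eqP h; apply/eqP/val_inj.
    by rewrite polyC0 mul0r.
  by rewrite rmorphM /= map_polyC map_polyXn /= (hev s0 ps) eqxx polyC1 mul1r.
have hd0 : (dmin tl hd S T <= k0.+2)%N.
  rewrite /dmin.
  apply: (@bigminn_leT _ _ _ _ i) => //.
  apply: (@bigminn_leT _ _ _ _ j) => //.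
  apply: (@bigminn_leT _ _ _ _ k0) => //.
  by apply: (@bigminn_leT _ _ _ _ s0).
have hM : map_poly (meval v) (Mtf tl hd F S T i j) = 'X^(k0.+2 - dmin tl hd S T).
  rewrite /Mtf.
  have -> : forall d P, map_poly (meval v) (drop_poly d P) =
      drop_poly d (map_poly (meval v) P).
    by move=> d P; apply/polyP => n; rewrite coef_map !coef_drop_poly coef_map.
  by rewrite hT -{1}(subnK hd0) exprD drop_polyMXn_id.
apply/eqP => h0; have := congr1 (meval v) h0.
rewrite -horner_map hM hornerXn /= mevalC meval0 => h1.
by move: (expf_neq0 (k0.+2 - dmin tl hd S T) c0); rewrite h1 eqxx.
Qed.
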